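(* Let $\mathbf{x}$ be an infinite word satisfying $r(i,\mathbf{x})\le 2i+1$ for all $i\ge1$. Let $m,n$ be positive integers with $r(n,\mathbf{x})=2n+1$ and $m\ge 2n+1$. If $k$ is the integer with $r(k-1,\mathbf{x})<m\le r(k,\mathbf{x})$, then $k\ge n$ and $r(k,\mathbf{x})-k\le m-n$.
   Context: For $\mathbf{x}=x_1x_2\ldots$, $x_i^j=x_i\cdots x_j$ (empty if $j<i$) and for $n\ge0$, $r(n,\mathbf{x})=\min\{m\ge1:\ x_i^{i+n-1}=x_{m-n+1}^{m}\text{ for some } 1\le i\le m-n\}$ (so $r(0,\mathbf{x})=1$); $n\mapsto r(n,\mathbf{x})$ is strictly increasing. *)

(* Defs.v *)
From mathcomp Require Import all_boot.
From Stdlib Require Import ClassicalEpsilon.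
Set Implicit Arguments. Unset Strict Implicit. Unset Printing Implicit Defensive.

(* An infinite word x = x_1 x_2 ... over a finite alphabet A is a function
   x : nat -> A, where x i is the letter x_i (i >= 1); the value x 0 is unused. *)

(* rprop x n m  <=>  m >= 1 and x_i^{i+n-1} = x_{m-n+1}^m for some 1 <= i <= m-n. *)
Definition rprop (A : finType) (x : nat -> A) (n m : nat) : bool :=
  (0 < m) &&
  [exists i : 'I_(m - n).+1,
      (0 < (i : nat)) && [forall j : 'I_n, x (i + j) == x (m - n + 1 + j)]].

(* r(n,x) = min { m >= 1 : rprop x n m }.  Over a finite alphabet this set is
   always nonempty (pigeonhole); the default 0 is never used. *)
Definition r (A : finType) (n : nat) (x : nat -> A) : nat :=
  match excluded_middle_informative (exists m, rprop x n m) with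
  | left H => ex_minn H
  | right _ => 0
  end.

(* Main.v *)
Require Import Defs.
From mathcomp Require Import all_boot.
From mathcomp Require Import zify.
From Stdlib Require Import ClassicalEpsilon.
Set Implicit Arguments.

Section Aux.
Variables (A : finType) (x : nat -> A).

Lemma rP n : (exists m, rprop x n m) ->
  rprop x n (r n x) /\ forall m, rprop x n m -> r n x <= m.
Proof.
move=> H; rewrite /r; case: excluded_middle_informative => [H'|//].
case: ex_minnP => M HM Hmin; split => //.
Qed.

Lemma r_undef n : ~ (exists m, rprop x n m) -> r n x = 0.
Proof. by move=> H; rewrite /r; case: excluded_middle_informative. Qed.

Lemma rprop_step n M : rprop x n.+1 M -> rprop x n M.-1.
Proof.
case/andP=> HM /existsP [i /andP [Hi /forallP Hj]].
have iM := ltn_ord i.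
have Hi' : (i : nat) < (M.-1 - n).+1 by lia.
apply/andP; split; first by lia.
apply/existsP; exists (Ordinal Hi'); apply/andP; split => //=.
apply/forallP => j.
have := Hj (widen_ord (leqnSn n) j) => /= /eqP ->.
have -> : M - n.+1 + 1 + j = M.-1 - n + 1 + j by lia.
by [].
Qed.

Lemma ex_step n : (exists M, rprop x n.+1 M) -> exists M, rprop x n M.
Proof. by case=> M HM; exists M.-1; apply: rprop_step. Qed.

Lemma r_step n : (exists M, rprop x n.+1 M) -> r n x < r n.+1 x.
Proof.
move=> H; have [H1 _] := rP _ H.
have H2 := rprop_step _ _ H1.
have [_ Hmin] := rP _ (ex_step _ H).
have := Hmin _ H2.
move: H1 => /andP [Hp _]; lia.
Qed.

Lemma r_mono d i : (exists M, rprop x (i + d) M) -> r i x + d <= r (i + d) x.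
Proof.
elim: d => [|d IH]; first by rewrite !addn0.
rewrite addnS => H.
have := r_step _ H.
have := IH (ex_step _ H); lia.
Qed.

End Aux.

Theorem lemma5p6 (A : finType) (x : nat -> A) (m n k : nat) :
  (forall i, 1 <= i -> r i x <= 2 * i + 1) ->
  0 < m -> 0 < n ->
  r n x = 2 * n + 1 ->
  2 * n + 1 <= m ->
  r k.-1 x < m <= r k x ->
  n <= k /\ r k x - k <= m - n.
Proof.
move=> Hb Hm Hn Hrn Hnm /andP [Hk1 Hk2].
have Hexk : exists M, rprop x k M.
  case: (classic (exists M, rprop x k M)) => // H.
  by move: Hk2; rewrite r_undef //; lia.
have Hkn : n <= k.
  case: (leqP n k) => // Hlt.
  have Hexn : exists M, rprop x n M.
    case: (classic (exists M, rprop x n M)) => // H.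
    by move: Hrn; rewrite r_undef //; lia.
  have E : n = k + (n - k) by lia.
  have := @r_mono A x _ _ (eq_ind _ (fun t => exists M, rprop x t M) Hexn _ E).
  rewrite -E; lia.
split => //.
have Hbk := Hb k (leq_trans Hn Hkn).
case: (ltnP n k) => Hlt; last first.
  have Heq : n = k by move: Hlt Hkn; clear; lia.
  move: Hbk Hnm; rewrite -Heq; move: (r n x) => a; clear; lia.
have E : k = (n + (k.-1 - n)).+1 by lia.
have Hex' : exists M, rprop x (n + (k.-1 - n)) M.
  apply: (@ex_step A x); exact: (eq_ind _ (fun t => exists M, rprop x t M) Hexk _ E).
have := @r_mono A x _ _ Hex'.
have -> : n + (k.-1 - n) = k.-1 by lia.
move: Hk1 Hrn Hbk E; move: (r n x) (r k x) (r k.-1 x) => a b c; clear; lia.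
Qed.
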